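(* Let $M=uI+N\in F(\mathcal{R})$, where $u$ is a positive unit of $\mathcal{R}$ and $N$ is the $2\times2$ matrix with rows $\lambda_1v$ and $\lambda_2v$, $v=(1-x,1-y)$, $\lambda_1,\lambda_2\in\mathcal{R}$, $\lambda_1(1-x)+\lambda_2(1-y)=1-u$. Then (i) $M^n=u^nI+(1+u+u^2+\dots+u^{n-1})N$ for every integer $n>1$; (ii) if $M$ lies in the commutator subgroup of $F(\mathcal{R})$ then $\lambda_1,\lambda_2\in\Sigma$; more generally, if $M$ lies in the $j$-th term $F(\mathcal{R})_j$ of the lower central series of $F(\mathcal{R})$ ($j\ge1$), then $\lambda_1,\lambda_2\in\Sigma^{j-1}$.
   Context: $\mathcal{R}=\mathbb{Z}[x,x^{-1},y,y^{-1}]$; positive units are the monomials $x^iy^j$; $\Sigma$ is the augmentation ideal of $\mathcal{R}$ (kernel of $x,y\mapsto1$ to $\mathbb{Z}$), with $\Sigma^0=\mathcal{R}$. $F(\mathcal{R})$ is the subgroup of $GL_2(\mathcal{R})$ generated by $M_1=\begin{pmatrix}1&1-y\\0&x\end{pmatrix}$ and $M_2=\begin{pmatrix}y&0\\1-x&1\end{pmatrix}$. Every element of $F(\mathcal{R})$ has the form $uI+N$ described in the claim (and $u,\lambda_1,\lambda_2$ are determined by the element). The lower central series is $G_1=G$, $G_j=[G,G_{j-1}]$. *)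

(* Defs.v *)
From HB Require Import structures.
From mathcomp Require Import all_boot all_order all_algebra fraction.
Set Implicit Arguments. Unset Strict Implicit. Unset Printing Implicit Defensive.
Import Order.TTheory GRing.Theory Num.Theory.
Local Open Scope ring_scope.

(* The Laurent ring R = Z[x,x^-1,y,y^-1] is realised as the
   subring of K = Frac(Z[x,y]) (Z[x,y] = {poly {poly int}}, inner variable x,
   outer variable y) consisting of the elements p / (x^a y^b). *)
Definition K : Type := {fraction {poly {poly int}}}.
Notation tofrac := (@FracField.tofrac {poly {poly int}}).
Notation "x %:F" := (tofrac x) : ring_scope.

Definition X : K := ((('X : {poly int})%:P : {poly {poly int}}))%:F.
Definition Y : K := (('X : {poly {poly int}}))%:F.

Definition laurent (f : K) : Prop :=
  exists (p : {poly {poly int}}) (a b : nat), f = p%:F / (X ^+ a * Y ^+ b).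

Definition aug (f : K) : Prop :=
  exists (p : {poly {poly int}}) (a b : nat),
    f = p%:F / (X ^+ a * Y ^+ b) /\ (p.[1%:P]).[1] = 0.

Inductive sigma_pow : nat -> K -> Prop :=
| sp0 f : laurent f -> sigma_pow 0 f
| spM k a b : aug a -> sigma_pow k b -> sigma_pow k.+1 (a * b)
| spD k f g : sigma_pow k.+1 f -> sigma_pow k.+1 g -> sigma_pow k.+1 (f + g).

Definition mx2 (a b c d : K) : 'M[K]_2 :=
  \matrix_(i < 2, j < 2)
    (if (i : nat) == 0%N then (if (j : nat) == 0%N then a else b)
     else (if (j : nat) == 0%N then c else d)).

Definition M1 : 'M[K]_2 := mx2 1 (1 - Y) 0 X.
Definition M2 : 'M[K]_2 := mx2 Y 0 (1 - X) 1.

Inductive inF : 'M[K]_2 -> Prop :=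
| inF1 : inF M1
| inF2 : inF M2
| inFM A B : inF A -> inF B -> inF (A *m B)
| inFV A : inF A -> inF (invmx A).

Definition commg2 (A B : 'M[K]_2) : 'M[K]_2 :=
  invmx A *m invmx B *m A *m B.

Inductive lcs : nat -> 'M[K]_2 -> Prop :=
| lcs1 A : inF A -> lcs 1 A
| lcsC j A B : inF A -> lcs j.+1 B -> lcs j.+2 (commg2 A B)
| lcsM j A B : lcs j.+2 A -> lcs j.+2 B -> lcs j.+2 (A *m B)
| lcsV j A : lcs j.+2 A -> lcs j.+2 (invmx A).

Definition Nmat (l1 l2 : K) : 'M[K]_2 :=
  mx2 (l1 * (1 - X)) (l1 * (1 - Y)) (l2 * (1 - X)) (l2 * (1 - Y)).

(* Main.v *)
Require Import Defs.
From HB Require Import structures.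
From mathcomp Require Import all_boot all_order all_algebra fraction.
From mathcomp Require Import ring.
Import Order.TTheory GRing.Theory Num.Theory.
Set Implicit Arguments. Unset Strict Implicit.
Local Open Scope ring_scope.

Section Gen.
Variable F : fieldType.

Definition mx2g (a b c d : F) : 'M[F]_2 :=
  \matrix_(i < 2, j < 2)
    (if (i : nat) == 0%N then (if (j : nat) == 0%N then a else b)
     else (if (j : nat) == 0%N then c else d)).

Lemma mx2g_eq a b c d a' b' c' d' : a = a' -> b = b' -> c = c' -> d = d' ->
  mx2g a b c d = mx2g a' b' c' d'.
Proof. by move=> -> -> -> ->. Qed.

Lemma mx2g_mul a b c d a' b' c' d' :
  mx2g a b c d *m mx2g a' b' c' d' =
  mx2g (a*a' + b*c') (a*b' + b*d') (c*a' + d*c') (c*b' + d*d').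
Proof.
apply/matrixP => i j; rewrite !mxE !big_ord_recr big_ord0 /= !mxE /= add0r.
by case: i => [[|[|i]] Hi] //; case: j => [[|[|j]] Hj].
Qed.

Lemma mx2g_add a b c d a' b' c' d' :
  mx2g a b c d + mx2g a' b' c' d' = mx2g (a+a') (b+b') (c+c') (d+d').
Proof.
apply/matrixP => i j; rewrite !mxE.
by case: i => [[|[|i]] Hi] //; case: j => [[|[|j]] Hj].
Qed.

Lemma mx2g_scale k a b c d :
  k *: mx2g a b c d = mx2g (k*a) (k*b) (k*c) (k*d).
Proof.
apply/matrixP => i j; rewrite !mxE.
by case: i => [[|[|i]] Hi] //; case: j => [[|[|j]] Hj].
Qed.

Lemma mx2g_scalar k : k%:M = mx2g k 0 0 k :> 'M[F]_2.
Proof.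
apply/matrixP => i j; rewrite !mxE.
by case: i => [[|[|i]] Hi] //; case: j => [[|[|j]] Hj].
Qed.

Lemma mx2g_01 a b c d : mx2g a b c d ord0 (lift ord0 ord0) = b.
Proof. by rewrite mxE. Qed.
Lemma mx2g_10 a b c d : mx2g a b c d (lift ord0 ord0) ord0 = c.
Proof. by rewrite mxE. Qed.

Variables x y : F.

Definition Ng l1 l2 := mx2g (l1*(1-x)) (l1*(1-y)) (l2*(1-x)) (l2*(1-y)).

Definition rep (A : 'M[F]_2) u l1 l2 :=
  A = u%:M + Ng l1 l2 /\ l1*(1-x) + l2*(1-y) = 1 - u.

Lemma rep_mul A B u l1 l2 u' m1 m2 : rep A u l1 l2 -> rep B u' m1 m2 ->
  rep (A *m B) (u * u') (l1 + u * m1) (l2 + u * m2).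
Proof.
move=> [-> hA] [-> hB]; split; last first.
  have -> : u = 1 - (l1*(1-x) + l2*(1-y)) by rewrite hA; ring.
  have -> : u' = 1 - (m1*(1-x) + m2*(1-y)) by rewrite hB; ring.
  ring.
have -> : u = 1 - (l1*(1-x) + l2*(1-y)) by rewrite hA; ring.
have -> : u' = 1 - (m1*(1-x) + m2*(1-y)) by rewrite hB; ring.
rewrite /Ng !mx2g_scalar !mx2g_add mx2g_mul; apply: mx2g_eq; ring.
Qed.

Lemma rep_inv A u l1 l2 : u != 0 -> rep A u l1 l2 ->
  rep (invmx A) u^-1 (- (u^-1 * l1)) (- (u^-1 * l2)).
Proof.
move=> hu [-> hA].
have Eu : u = 1 - (l1*(1-x) + l2*(1-y)) by rewrite hA; ring.
rewrite Eu in hu *.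
pose B := ((1 - (l1*(1-x) + l2*(1-y)))^-1%:M + Ng (- ((1 - (l1*(1-x) + l2*(1-y)))^-1 * l1)) (- ((1 - (l1*(1-x) + l2*(1-y)))^-1 * l2))) : 'M[F]_2.
have hB : ((1 - (l1 * (1 - x) + l2 * (1 - y)))%:M + Ng l1 l2) *m B = 1%:M.
  rewrite /B /Ng !mx2g_scalar !mx2g_add mx2g_mul; apply: mx2g_eq; field => //.
have [hAu _] := mulmx1_unit hB.
split; last by field.
by rewrite -[RHS]/B -[RHS](mulKmx hAu) hB mulmx1.
Qed.

Lemma rep_unique A u l1 l2 u' m1 m2 : x != 1 -> y != 1 ->
  rep A u l1 l2 -> rep A u' m1 m2 -> l1 = m1 /\ l2 = m2.
Proof.
move=> hx hy [-> _] [E _].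
have := congr1 (fun M : 'M[F]_2 => M ord0 (lift ord0 ord0)) E.
have := congr1 (fun M : 'M[F]_2 => M (lift ord0 ord0) ord0) E.
rewrite /Ng !mx2g_scalar !mx2g_add !mx2g_01 !mx2g_10 !add0r => e2 e1.
have hx' : 1 - x != 0 by rewrite subr_eq0 eq_sym.
have hy' : 1 - y != 0 by rewrite subr_eq0 eq_sym.
split; [exact: (mulIf hy') | exact: (mulIf hx')].
Qed.

Lemma rep_pow A u l1 l2 : rep A u l1 l2 -> forall n : nat,
  A ^+ n = (u ^+ n)%:M + (\sum_(k < n) u ^+ k) *: Ng l1 l2.
Proof.
move=> [-> hA]; elim=> [|n IH].
  by rewrite expr0 big_ord0 scale0r addr0.
rewrite exprS IH big_ord_recr /= -mulmxE exprS.
move: (\sum_(i < n) u ^+ i) (u ^+ n) => s w.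
have -> : u = 1 - (l1*(1-x) + l2*(1-y)) by rewrite hA; ring.
rewrite /Ng !mx2g_scalar !mx2g_scale !mx2g_add mx2g_mul; apply: mx2g_eq; ring.
Qed.

Lemma comm_identity (uA uB a b : F) : uA != 0 -> uB != 0 ->
  - (uA^-1 * a) + uA^-1 * (- (uB^-1 * b)) + uA^-1 * uB^-1 * a + uA^-1 * uB^-1 * uA * b
  = uA^-1 * uB^-1 * ((1 - uB) * a + (-(1 - uA)) * b).
Proof. move=> ha hb; field; by rewrite ?ha ?hb. Qed.
Lemma rep_M1 : rep (mx2g 1 (1-y) 0 x) x 1 0.
Proof. rewrite /rep /Ng mx2g_scalar mx2g_add; split; [apply: mx2g_eq|]; ring. Qed.
Lemma rep_M2 : rep (mx2g y 0 (1-x) 1) y 0 1.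
Proof. rewrite /rep /Ng mx2g_scalar mx2g_add; split; [apply: mx2g_eq|]; ring. Qed.
Lemma comm_u (u1 u2 : F) : u1 != 0 -> u2 != 0 -> u1^-1 * u2^-1 * u1 * u2 = 1.
Proof. move=> h1 h2; field; by rewrite ?h1 ?h2. Qed.
End Gen.

Section Helpers.
Variable F : fieldType.
Variables x y : F.
Hypotheses (hx : x != 0) (hy : y != 0).
Let nz a b : x^+a * y^+b != 0. Proof. by rewrite mulf_neq0 ?expf_neq0. Qed.

Lemma hfrac_add (P Q : F) (a b c d : nat) :
  P / (x^+a * y^+b) + Q / (x^+c * y^+d) = (P * x^+c * y^+d + Q * x^+a * y^+b) / (x^+(a+c) * y^+(b+d)).
Proof. rewrite !exprD; field; by rewrite ?mulf_neq0 ?expf_neq0. Qed.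

Lemma hfrac_mul (P Q : F) (a b c d : nat) :
  P / (x^+a * y^+b) * (Q / (x^+c * y^+d)) = (P * Q) / (x^+(a+c) * y^+(b+d)).
Proof. rewrite !exprD; field; by rewrite ?mulf_neq0 ?expf_neq0. Qed.

Lemma hfrac_neg (P : F) (a b : nat) : - (P / (x^+a * y^+b)) = (- P) / (x^+a * y^+b).
Proof. by rewrite mulNr. Qed.

Lemma hfrac_id (P : F) : P = P / (x^+0 * y^+0).
Proof. by rewrite !expr0 mulr1 divr1. Qed.

Lemma hmono_inv (n m c d : nat) :
  (x^+n * y^+m / (x^+c * y^+d))^-1 = x^+c * y^+d / (x^+n * y^+m).
Proof. field; by rewrite ?mulf_neq0 ?expf_neq0. Qed.

Lemma hmono_aug (n m c d : nat) :
  1 - x^+n * y^+m / (x^+c * y^+d) = (x^+c * y^+d - x^+n * y^+m) / (x^+c * y^+d).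
Proof. field; by rewrite ?mulf_neq0 ?expf_neq0. Qed.

Lemma hmono_neq0 (n m c d : nat) : x^+n * y^+m / (x^+c * y^+d) != 0.
Proof. by rewrite mulf_neq0 ?invr_eq0 ?mulf_neq0 ?expf_neq0. Qed.
End Helpers.

Definition xp : {poly {poly int}} := ('X)%:P.
Definition yp : {poly {poly int}} := 'X.
Definition ev (p : {poly {poly int}}) : int := (p.[1%:P]).[1].

Lemma evD p q : ev (p + q) = ev p + ev q.
Proof. by rewrite /ev !hornerD. Qed.
Lemma evM p q : ev (p * q) = ev p * ev q.
Proof. by rewrite /ev !hornerM. Qed.
Lemma evN p : ev (- p) = - ev p.
Proof. by rewrite /ev !hornerN. Qed.
Lemma evX n : ev (xp ^+ n) = 1.
Proof. by rewrite /ev /xp horner_exp hornerC horner_exp hornerX expr1n. Qed.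
Lemma evY n : ev (yp ^+ n) = 1.
Proof. by rewrite /ev /yp horner_exp hornerX -rmorphXn hornerC expr1n. Qed.
Lemma ev1 : ev 1 = 1.
Proof. by rewrite /ev !hornerC. Qed.

Lemma XE : X = xp%:F. Proof. by []. Qed.
Lemma YE : Y = yp%:F. Proof. by []. Qed.

Lemma X_neq0 : X != 0.
Proof. by rewrite /X tofrac_eq0 polyC_eq0 polyX_eq0. Qed.
Lemma Y_neq0 : Y != 0.
Proof. by rewrite /Y tofrac_eq0 polyX_eq0. Qed.
Lemma X_neq1 : X != 1.
Proof.
rewrite /X -tofrac1 tofrac_eq -polyC1 (inj_eq polyC_inj).
apply/eqP => /(congr1 (size : {poly int} -> nat)).
by rewrite size_polyX size_polyC oner_eq0.
Qed.
Lemma Y_neq1 : Y != 1.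
Proof.
rewrite /Y -tofrac1 tofrac_eq.
apply/eqP => /(congr1 (size : {poly {poly int}} -> nat)).
by rewrite size_polyX size_polyC oner_eq0.
Qed.

Lemma xF0 : tofrac xp != 0. Proof. exact: X_neq0. Qed.
Lemma yF0 : tofrac yp != 0. Proof. exact: Y_neq0. Qed.
Opaque X Y.

Ltac tf := rewrite ?(tofracD, tofracM, tofracXn, tofracN, tofracB, tofrac1, tofrac0) ?XE ?YE.

Lemma laurent_add f g : laurent f -> laurent g -> laurent (f + g).
Proof.
move=> [p [a [b ->]]] [q [c [d ->]]].
exists (p * xp^+c * yp^+d + q * xp^+a * yp^+b), (a + c)%N, (b + d)%N.
tf; exact: (@hfrac_add K _ _ xF0 yF0).
Qed.

Lemma laurent_mul f g : laurent f -> laurent g -> laurent (f * g).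
Proof.
move=> [p [a [b ->]]] [q [c [d ->]]].
exists (p * q), (a + c)%N, (b + d)%N.
tf; exact: (@hfrac_mul K _ _ xF0 yF0).
Qed.

Lemma laurent_poly p : laurent (p%:F).
Proof. exists p, 0%N, 0%N; tf; exact: hfrac_id. Qed.

Lemma laurent0 : laurent 0. Proof. by rewrite -tofrac0; apply: laurent_poly. Qed.
Lemma laurent1 : laurent 1. Proof. by rewrite -tofrac1; apply: laurent_poly. Qed.

Lemma laurent_N f : laurent f -> laurent (- f).
Proof. move=> h; rewrite -mulN1r; apply: laurent_mul h; rewrite -tofrac1 -tofracN; exact: laurent_poly. Qed.

Lemma aug_laurent f : aug f -> laurent f.
Proof. by move=> [p [a [b [-> _]]]]; exists p, a, b. Qed.

Lemma aug_add f g : aug f -> aug g -> aug (f + g).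
Proof.
move=> [p [a [b [-> hp]]]] [q [c [d [-> hq]]]].
exists (p * xp^+c * yp^+d + q * xp^+a * yp^+b), (a + c)%N, (b + d)%N.
split; last by rewrite -/(ev _) evD !evM (hp : ev p = 0) (hq : ev q = 0) !mul0r addr0.
tf; exact: (@hfrac_add K _ _ xF0 yF0).
Qed.

Lemma aug_mull c f : laurent c -> aug f -> aug (c * f).
Proof.
move=> [q [a [b ->]]] [p [c' [d [-> hp]]]].
exists (q * p), (a + c')%N, (b + d)%N.
split; last by rewrite -/(ev _) evM (hp : ev p = 0) mulr0.
tf; exact: (@hfrac_mul K _ _ xF0 yF0).
Qed.

Lemma aug0 : aug 0.
Proof. exists 0, 0%N, 0%N; split; first by rewrite tofrac0 mul0r. by rewrite !horner0. Qed.

Definition mono (u : K) := exists n m c d : nat, u = X^+n * Y^+m / (X^+c * Y^+d).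

Lemma mono_neq0 u : mono u -> u != 0.
Proof. move=> [n [m [c [d ->]]]]; tf; exact: (@hmono_neq0 K _ _ xF0 yF0). Qed.

Lemma mono_mul u v : mono u -> mono v -> mono (u * v).
Proof.
move=> [n [m [c [d ->]]]] [n' [m' [c' [d' ->]]]].
exists (n + n')%N, (m + m')%N, (c + c')%N, (d + d')%N; tf.
rewrite (@hfrac_mul K _ _ xF0 yF0) !exprD; congr (_ / _); rewrite -!mulrA; congr (_ * _).
by rewrite mulrC -!mulrA; congr (_ * _); rewrite mulrC.
Qed.

Lemma mono_inv u : mono u -> mono (u^-1).
Proof. move=> [n [m [c [d ->]]]]; exists c, d, n, m; tf; exact: (@hmono_inv K _ _ xF0 yF0). Qed.

Lemma mono1 : mono 1.
Proof. exists 0%N, 0%N, 0%N, 0%N; by rewrite !(expr0, expr1, mulr1, invr1, mul1r). Qed.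
Lemma monoX : mono X.
Proof. exists 1%N, 0%N, 0%N, 0%N; by rewrite !(expr0, expr1, mulr1, invr1, mul1r). Qed.
Lemma monoY : mono Y.
Proof. exists 0%N, 1%N, 0%N, 0%N; by rewrite !(expr0, expr1, mulr1, invr1, mul1r). Qed.

Lemma mono_laurent u : mono u -> laurent u.
Proof. move=> [n [m [c [d ->]]]]; exists (xp^+n * yp^+m), c, d; tf => //. Qed.

Lemma mono_aug u : mono u -> aug (1 - u).
Proof.
move=> [n [m [c [d ->]]]]; exists (xp^+c * yp^+d - xp^+n * yp^+m), c, d.
split; last by rewrite -/(ev _) evD evN !evM !evX !evY mulr1 subrr.
tf; exact: (@hmono_aug K _ _ xF0 yF0).
Qed.

Lemma mono_exprn u (k : nat) : mono u -> mono (u ^+ k).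
Proof.
move=> hu; elim: k => [|k IH]; first by rewrite expr0; apply: mono1.
by rewrite exprS; apply: mono_mul.
Qed.

Lemma mono_exprz u (a : int) : mono u -> mono (u ^ a).
Proof.
move=> hu; case: a => k.
- by rewrite -exprnP; apply: mono_exprn.
- by rewrite NegzE -exprnN; apply: mono_inv; apply: mono_exprn.
Qed.

Lemma sp_laurent k f : sigma_pow k f -> laurent f.
Proof.
elim=> {k f} [f //| k a b ha _ hb | k f g _ hf _ hg].
- by apply: laurent_mul => //; apply: aug_laurent.
- by apply: laurent_add.
Qed.

Lemma sp_mull k c f : laurent c -> sigma_pow k f -> sigma_pow k (c * f).
Proof.
move=> hc h; elim: h c hc => {k f} [f hf| k a b ha hsb _ | k f g _ hf _ hg] c hc.
- by apply: sp0; apply: laurent_mul.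
- by rewrite mulrA; apply: spM => //; apply: aug_mull.
- by rewrite mulrDr; apply: spD; [apply: hf | apply: hg].
Qed.

Lemma sp_add k f g : sigma_pow k f -> sigma_pow k g -> sigma_pow k (f + g).
Proof.
case: k => [|k] hf hg; last by apply: spD.
by apply: sp0; apply: laurent_add; [apply: sp_laurent hf | apply: sp_laurent hg].
Qed.

Lemma sp_zero k : sigma_pow k 0.
Proof.
elim: k => [|k IH]; first by apply: sp0; apply: laurent0.
by rewrite -(mul0r 0); apply: spM => //; apply: aug0.
Qed.
Opaque X Y.

Definition Rp (A : 'M[K]_2) u l1 l2 := @rep K X Y A u l1 l2.

Lemma laurentN1 : laurent (-1).
Proof. apply: laurent_N; exact: laurent1. Qed.

Lemma inF_inv A : inF A -> exists u l1 l2,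
  mono u /\ Rp A u l1 l2 /\ laurent l1 /\ laurent l2.
Proof.
elim=> {A} [|| A B _ [u [l1 [l2 [hu [hr [h1 h2]]]]]] _ [u' [m1 [m2 [hu' [hr' [h1' h2']]]]]]
  | A _ [u [l1 [l2 [hu [hr [h1 h2]]]]]]].
- exists X, 1, 0; split; first exact: monoX.
  split; first exact: (@rep_M1 K X Y).
  by split; [exact: laurent1 | exact: laurent0].
- exists Y, 0, 1; split; first exact: monoY.
  split; first exact: (@rep_M2 K X Y).
  by split; [exact: laurent0 | exact: laurent1].
- exists (u * u'), (l1 + u * m1), (l2 + u * m2); split; first exact: mono_mul.
  split; first exact: (@rep_mul K X Y).
  by split; apply: laurent_add => //; apply: laurent_mul => //; apply: mono_laurent.
- exists u^-1, (- (u^-1 * l1)), (- (u^-1 * l2)); split; first exact: mono_inv.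
  split; first by apply: (@rep_inv K X Y) => //; apply: mono_neq0.
  by split; apply: laurent_N; apply: laurent_mul => //; apply: mono_laurent; apply: mono_inv.
Qed.

Lemma lcs_inv j A : lcs j A -> exists u l1 l2,
  mono u /\ Rp A u l1 l2 /\ sigma_pow j.-1 l1 /\ sigma_pow j.-1 l2 /\ ((2 <= j)%N -> u = 1).
Proof.
elim=> {j A}.
- move=> A /inF_inv [u [l1 [l2 [hu [hr [h1 h2]]]]]].
  by exists u, l1, l2; do !split => //; apply: sp0.
- move=> j A B /inF_inv [uA [l1 [l2 [hu [hr [h1 h2]]]]]] _ [uB [m1 [m2 [hu' [hr' [h1' [h2' hj]]]]]]].
  have nA := mono_neq0 hu; have nB := mono_neq0 hu'.
  have r := rep_mul (rep_mul (rep_mul (rep_inv nA hr) (rep_inv nB hr')) hr) hr'.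
  rewrite (comm_u nA nB) !(comm_identity _ _ nA nB) in r.
  exists 1, (uA^-1 * uB^-1 * ((1 - uB) * l1 + - (1 - uA) * m1)),
    (uA^-1 * uB^-1 * ((1 - uB) * l2 + - (1 - uA) * m2)).
  split; first exact: mono1.
  split; first exact: r.
  have hl : laurent (uA^-1 * uB^-1) by apply: mono_laurent; apply: mono_mul; apply: mono_inv.
  have haug : aug (- (1 - uA)).
    by rewrite -mulN1r; apply: aug_mull; [exact: laurentN1 | exact: mono_aug].
  have key : forall l m, laurent l -> sigma_pow j m ->
      sigma_pow j.+1 (uA^-1 * uB^-1 * ((1 - uB) * l + - (1 - uA) * m)).
    move=> l m hl1 hm; apply: sp_mull => //; apply: sp_add; last exact: spM.
    clear -hj hm hl1 hu hu'; case: j hj hm => [|j] hj hm; first by apply: spM; [exact: mono_aug | exact: sp0].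
    by rewrite hj // subrr mul0r; apply: sp_zero.
  by split; [|split] => //; apply: key.
- move=> j A B _ [u [l1 [l2 [hu [hr [h1 [h2 hj]]]]]]] _ [u' [m1 [m2 [hu' [hr' [h1' [h2' hj']]]]]]].
  have r := rep_mul hr hr'.
  rewrite hj // hj' // in r; rewrite !mul1r in r.
  exists 1, (l1 + m1), (l2 + m2); split; first exact: mono1.
  by split => //; split; [|split] => //; apply: sp_add.
- move=> j A _ [u [l1 [l2 [hu [hr [h1 [h2 hj]]]]]]].
  have r := rep_inv (mono_neq0 hu) hr.
  rewrite hj // invr1 !mul1r in r.
  exists 1, (- l1), (- l2); split; first exact: mono1.
  split => //; split; [|split] => //; rewrite -mulN1r; apply: sp_mull => //; exact: laurentN1.
Qed.

Theorem lemma2 (M : 'M[K]_2) (a b : int) (l1 l2 : K) :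
  inF M -> laurent l1 -> laurent l2 ->
  l1 * (1 - X) + l2 * (1 - Y) = 1 - X ^ a * Y ^ b ->
  M = (X ^ a * Y ^ b)%:M + Nmat l1 l2 ->
  (forall n : nat, (1 < n)%N ->
     M ^+ n = ((X ^ a * Y ^ b) ^+ n)%:M
              + (\sum_(k < n) (X ^ a * Y ^ b) ^+ k) *: Nmat l1 l2)
  /\ (forall j : nat, (1 <= j)%N -> lcs j M ->
        sigma_pow j.-1 l1 /\ sigma_pow j.-1 l2).
Proof.
move=> hF hl1 hl2 hrel hM.
have hr : Rp M (X ^ a * Y ^ b) l1 l2 by split.
split.
  by move=> n _; apply: (@rep_pow K X Y M _ l1 l2 hr).
move=> j _ /lcs_inv [u [m1 [m2 [_ [hr' [h1 [h2 _]]]]]]].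
have [-> ->] := rep_unique X_neq1 Y_neq1 hr hr'.
by split.
Qed.
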